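(* Fix $m\ge3$ and let $f$ be an axis rule on profiles over a candidate set $C$ with $|C|=m$ that is the scoring rule induced by $\mathrm{cost}(A,\triangleleft)=g(x_{A,\triangleleft})$ for a function $g:\{0,1\}^m\to\mathbb R_{\ge0}$ with $g(x)=0$ iff the ones of $x$ are contiguous and $g(x)=g(\overleftarrow{x})$ for all $x$. If $f$ satisfies ballot monotonicity, then there is a function $h$ such that for every ballot $A$ and axis $\triangleleft$ with $A$ not an interval of $\triangleleft$, $\mathrm{cost}(A,\triangleleft)=h(k_{\mathrm{app}},k_{\mathrm{int}})$, where $k_{\mathrm{app}}=|A|$ and $k_{\mathrm{int}}$ is the number of interfering candidates of $A$ on $\triangleleft$.
   Context: Let $C$ be a finite set of $m$ candidates. An approval ballot is a nonempty subset $A\subseteq C$; a profile is a finite sequence of ballots. An axis is a strict linear order $\triangleleft$ on $C$; $a\trianglelefteq b$ means $a\triangleleft b$ or $a=b$. A ballot $A$ is an interval of $\triangleleft$ if for all $a,b\in A$ and every $c$ with $a\triangleleft c\triangleleft b$ we have $c\in A$; a candidate $c\notin A$ with $a\triangleleft c\triangleleft b$ for some $a,b\in A$ is interfering. If $\triangleleft=c_1c_2\cdots c_m$, the approval vector $x_{A,\triangleleft}\in\{0,1\}^m$ has $i$-th entry $1$ iff $c_i\in A$; $\overleftarrow{x}$ denotes the reversed vector. The scoring rule induced by $\mathrm{cost}$ is $f(P)=\arg\min_{\triangleleft}\sum_{A\in P}\mathrm{cost}(A,\triangleleft)$. $f$ satisfies ballot monotonicity if for every profile $P$, ballot $A\in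 P$ and $\triangleleft\in f(P)$ such that $A$ is not an interval of $\triangleleft$, we have $\triangleleft\in f(P')$, where $P'$ replaces $A$ by $A'=\{x\in C:\exists y,z\in A,\ y\trianglelefteq x\trianglelefteq z\}$. *)

(* Defs.v *)
From HB Require Import structures.
From mathcomp Require Import all_boot all_order all_algebra.
From mathcomp Require Import reals.
Set Implicit Arguments. Unset Strict Implicit. Unset Printing Implicit Defensive.
Import Order.TTheory GRing.Theory Num.Theory.
Local Open Scope ring_scope.

Definition axis (C : finType) := {ax : {ffun 'I_#|C| -> C} | injectiveb ax}.

Section Axes.
Variable C : finType.

Definition axf (ax : axis C) : 'I_#|C| -> C := val ax.

Definition axis_lt (ax : axis C) (a b : C) : bool :=
  [exists i : 'I_#|C|, exists j : 'I_#|C|,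
     [&& (i < j)%N, axf ax i == a & axf ax j == b]].

Definition axis_le (ax : axis C) (a b : C) : bool := (a == b) || axis_lt ax a b.

Definition is_interval (A : {set C}) (ax : axis C) : Prop :=
  forall a b c : C, a \in A -> b \in A -> axis_lt ax a c -> axis_lt ax c b -> c \in A.

Definition interfering (A : {set C}) (ax : axis C) : {set C} :=
  [set c | (c \notin A) &&
     [exists a, exists b, [&& a \in A, b \in A, axis_lt ax a c & axis_lt ax c b]]].

Definition appvec (A : {set C}) (ax : axis C) : {ffun 'I_#|C| -> bool} :=
  [ffun i => axf ax i \in A].

Definition interval_closure (A : {set C}) (ax : axis C) : {set C} :=
  [set x | [exists y, exists z, [&& y \in A, z \in A, axis_le ax y x & axis_le ax x z]]].

End Axes.

Definition revvec (n : nat) (x : {ffun 'I_n -> bool}) : {ffun 'I_n -> bool} :=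
  [ffun i => x (rev_ord i)].

Definition contiguous (n : nat) (x : {ffun 'I_n -> bool}) : Prop :=
  forall i j k : 'I_n, (i <= j)%N -> (j <= k)%N -> x i -> x k -> x j.

Section Rule.
Variables (C : finType) (R : realType).
Variable g : {ffun 'I_#|C| -> bool} -> R.

Definition cost (A : {set C}) (ax : axis C) : R := g (appvec A ax).

Definition is_profile (P : seq {set C}) : Prop := all (fun A => A != set0) P.

Definition total_cost (P : seq {set C}) (ax : axis C) : R :=
  \sum_(A <- P) cost A ax.

Definition in_rule (P : seq {set C}) (ax : axis C) : Prop :=
  forall ax' : axis C, total_cost P ax <= total_cost P ax'.

Definition ballot_monotone : Prop :=
  forall (P : seq {set C}) (i : nat) (ax : axis C),
    is_profile P -> (i < size P)%N -> in_rule P ax ->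
    ~ is_interval (nth set0 P i) ax ->
    in_rule (set_nth set0 P i (interval_closure (nth set0 P i) ax)) ax.

End Rule.

(* Main.v *)
Require Import Defs.
From HB Require Import structures.
From mathcomp Require Import all_boot all_order all_algebra.
From mathcomp Require Import reals.
From mathcomp Require Import ring lra zify.
From Stdlib Require Import Classical.
Import Order.TTheory GRing.Theory Num.Theory.
Local Open Scope ring_scope.

Section AxisFacts.
Variable C : finType.
Implicit Types (ax : axis C) (A S : {set C}).

Lemma ax_inj ax : injective (axf ax).
Proof. by apply/injectiveP; exact: (valP ax). Qed.

Lemma ax_surj ax c : exists i, axf ax i = c.
Proof.
have := @inj_card_onto _ _ (axf ax) (@ax_inj ax).
rewrite card_ord leqnn => /(_ isT c) /codomP [i ->]; by exists i.
Qed.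

Lemma axis_lt_idx ax i j : axis_lt ax (axf ax i) (axf ax j) = (i < j)%N.
Proof.
apply/existsP/idP => [[i' /existsP [j' /and3P [ij /eqP /ax_inj ei /eqP /ax_inj ej]]]|ij].
  by rewrite -ei -ej.
by exists i; apply/existsP; exists j; rewrite ij !eqxx.
Qed.

Lemma axis_le_idx ax i j : axis_le ax (axf ax i) (axf ax j) = (i <= j)%N.
Proof.
by rewrite /axis_le axis_lt_idx (inj_eq (@ax_inj ax)) [RHS]leq_eqVlt.
Qed.

Lemma interval_contig S ax : is_interval S ax <-> contiguous (appvec S ax).
Proof.
split.
  move=> H i j k ij jk; rewrite !ffunE => xi xk.
  case: (eqVneq i j) => [<- //|nij]; case: (eqVneq j k) => [-> //|njk].
  apply: (H _ _ _ xi xk); rewrite axis_lt_idx ltn_neqAle ?ij ?jk andbT.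
    by apply: contra nij => /eqP /val_inj ->.
  by apply: contra njk => /eqP /val_inj ->.
move=> H a b c.
have [i <-] := ax_surj ax a; have [k <-] := ax_surj ax b; have [j <-] := ax_surj ax c.
rewrite !axis_lt_idx => aS bS ij jk.
by move: (H i j k (ltnW ij) (ltnW jk)); rewrite !ffunE => /(_ aS bS).
Qed.

Lemma closure_idx A ax j :
  (axf ax j \in interval_closure A ax) <->
  exists i k : 'I_#|C|, [/\ (i <= j)%N, (j <= k)%N, axf ax i \in A & axf ax k \in A].
Proof.
rewrite inE; split.
  move=> /existsP [y /existsP [z /and4P [yA zA yj jz]]].
  move: yA zA yj jz; have [i <-] := ax_surj ax y; have [k <-] := ax_surj ax z.
  rewrite !axis_le_idx => yA zA ij jk; by exists i, k.
move=> [i [k [ij jk iA kA]]]; apply/existsP; exists (axf ax i); apply/existsP; exists (axf ax k).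
by rewrite iA kA !axis_le_idx ij jk.
Qed.

Lemma closure_interval A ax : is_interval (interval_closure A ax) ax.
Proof.
apply/interval_contig => i j k ij jk; rewrite !ffunE.
move=> /closure_idx [i1 [k1 [h1 h2 h3 h4]]] /closure_idx [i2 [k2 [h5 h6 h7 h8]]].
apply/closure_idx; exists i1, k2; split => //; [exact: leq_trans h1 ij|exact: leq_trans jk h6].
Qed.

Lemma sub_closure A ax : A \subset interval_closure A ax.
Proof.
apply/subsetP => c; have [j <-] := ax_surj ax c => cA.
by apply/closure_idx; exists j, j.
Qed.

Lemma int_eq A ax : interfering A ax = interval_closure A ax :\: A.
Proof.
apply/setP => c; have [j <-] := ax_surj ax c.
rewrite /interfering in_setD inE; case: (boolP (axf ax j \in A)) => //= jA.
apply/idP/idP.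
  move=> /existsP [a /existsP [b /and4P []]].
  have [i <-] := ax_surj ax a; have [k <-] := ax_surj ax b.
  rewrite !axis_lt_idx => iA kA ij jk.
  by apply/closure_idx; exists i, k; rewrite (ltnW ij) (ltnW jk).
move=> /closure_idx [i [k [ij jk iA kA]]].
apply/existsP; exists (axf ax i); apply/existsP; exists (axf ax k).
rewrite iA kA !axis_lt_idx /= !ltn_neqAle ij jk !andbT.
apply/andP; split.
  by apply/negP => /eqP ei; move: iA; rewrite (ord_inj ei) (negbTE jA).
by apply/negP => /eqP ei; move: kA; rewrite -(ord_inj ei) (negbTE jA).
Qed.

End AxisFacts.
Arguments ax_inj {C}. Arguments ax_surj {C}. Arguments axis_lt_idx {C}. Arguments axis_le_idx {C}.
Arguments interval_contig {C}. Arguments closure_idx {C}. Arguments closure_interval {C}. Arguments sub_closure {C}. Arguments int_eq {C}.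

Lemma sum_set_nth (R : realType) (T : Type) (F : T -> R) x0 (P : seq T) i y :
  (i < size P)%N ->
  \sum_(B <- set_nth x0 P i y) F B = \sum_(B <- P) F B - F (nth x0 P i) + F y.
Proof.
elim: P i => [//|a P IH] [|i] /=.
  by move=> _; rewrite !big_cons; ring.
by move=> lt; rewrite !big_cons IH //; ring.
Qed.

Section Cost.
Variables (C : finType) (R : realType) (g : {ffun 'I_#|C| -> bool} -> R).

Lemma appvec_bij (ax : axis C) : bijective (fun S : {set C} => appvec S ax).
Proof.
exists (fun v : {ffun 'I_#|C| -> bool} => [set c | [exists i, (axf ax i == c) && v i]]).
  move=> S; apply/setP => c; rewrite inE; have [j <-] := ax_surj ax c.
  apply/existsP/idP => [[i /andP [/eqP /ax_inj -> ]]|jS]; first by rewrite ffunE.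
  by exists j; rewrite eqxx ffunE.
move=> v; apply/ffunP => j; rewrite ffunE inE.
apply/existsP/idP => [[i /andP [/eqP /ax_inj -> //]]|vj].
by exists j; rewrite eqxx.
Qed.

Definition Pall : seq {set C} := [seq S <- enum {set C} | S != set0].

Lemma total_Pall (ax : axis C) :
  total_cost g Pall ax = \sum_v g v - g [ffun => false].
Proof.
rewrite /total_cost /Pall big_filter big_enum_cond /=.
rewrite (reindex (fun S : {set C} => appvec S ax)) /=; last exact/onW_bij/appvec_bij.
rewrite [in RHS](bigD1 set0) //=.
have -> : appvec set0 ax = [ffun => false] by apply/ffunP => j; rewrite !ffunE inE.
by rewrite addrC addrK.
Qed.

Hypothesis g0 : forall x, g x = 0 <-> contiguous x.
Hypothesis bm : ballot_monotone g.

Lemma key (A : {set C}) (ax ax' : axis C) : A != set0 -> ~ is_interval A ax ->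
  is_interval (interval_closure A ax) ax' -> g (appvec A ax') <= g (appvec A ax).
Proof.
move=> An nI HI.
have AP : A \in Pall by rewrite mem_filter An mem_enum.
set i := index A Pall.
have isz : (i < size Pall)%N by rewrite index_mem.
have nthA : nth set0 Pall i = A by rewrite nth_index.
have prof : is_profile Pall.
  by apply/allP => S; rewrite mem_filter => /andP[].
have opt : in_rule g Pall ax by move=> ax2; rewrite !total_Pall.
have := bm _ _ _ prof isz opt; rewrite nthA => /(_ nI) /(_ ax').
rewrite /total_cost !sum_set_nth // nthA.
have e : forall a, \sum_(B <- Pall) cost g B a = total_cost g Pall a by [].
rewrite !e !total_Pall /cost.
have -> : g (appvec (interval_closure A ax) ax) = 0.
  by apply/g0/interval_contig/closure_interval.
have -> : g (appvec (interval_closure A ax) ax') = 0.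
  by apply/g0/interval_contig.
lra.
Qed.

End Cost.

Definition canon (n k i : nat) : {ffun 'I_n -> bool} :=
  [ffun j : 'I_n => (j < k.-1)%N || (nat_of_ord j == k.-1 + i)%N].

Section Construct.
Variables (C : finType) (A : {set C}) (ax : axis C).
Hypothesis nI : ~ is_interval A ax.

Let H := interval_closure A ax.
Let I := interfering A ax.
Let k := #|A|.
Let i := #|I|.

Lemma witnesses : exists a b c,
  [/\ a \in A, b \in A, axis_lt ax a c, axis_lt ax c b & c \notin A].
Proof.
apply: NNPP => Hn; apply: nI => a b c aA bA ac cb; apply/negPn/negP => cA.
by apply: Hn; exists a, b, c.
Qed.

Lemma k_ge2 : (2 <= k)%N.
Proof.
have [a [b [c [aA bA ac cb cA]]]] := witnesses.
move: aA bA ac cb; have [ia <-] := ax_surj ax a; have [ib <-] := ax_surj ax b.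
have [ic <-] := ax_surj ax c; rewrite !axis_lt_idx => aA bA ac cb.
have neq : axf ax ia != axf ax ib.
  by apply/negP => /eqP /ax_inj e; move: ac cb; rewrite e => ac cb; have := ltn_trans ac cb; rewrite ltnn.
have sub : [set axf ax ia; axf ax ib] \subset A.
  by apply/subsetP => x; rewrite !inE => /orP [] /eqP ->.
by have := subset_leq_card sub; rewrite cards2 neq.
Qed.

Lemma i_ge1 : (1 <= i)%N.
Proof.
have [a [b [c [aA bA ac cb cA]]]] := witnesses.
rewrite card_gt0; apply/set0Pn; exists c; rewrite /I inE cA /=.
by apply/existsP; exists a; apply/existsP; exists b; rewrite aA bA ac cb.
Qed.

Lemma IH : I = H :\: A.
Proof. exact: int_eq. Qed.

Lemma cardH : #|H| = (k + i)%N.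
Proof.
have sAH : A \subset H := sub_closure A ax.
have : i = (#|H| - #|H :&: A|)%N by rewrite /i IH cardsD.
rewrite (setIidPr sAH) -/k => ->.
have := subset_leq_card sAH; rewrite -/k; lia.
Qed.

Section WithB.
Variable b : C.
Hypothesis bA : b \in A.

Let s := enum (A :\ b) ++ enum I ++ b :: enum (~: H).

Lemma sAH : A \subset H.
Proof. exact: sub_closure. Qed.

Lemma card_b : #|A :\ b| = k.-1.
Proof. by rewrite /k (cardsD1 b A) bA. Qed.

Lemma card_cH : #|~: H| = (#|C| - (k + i))%N.
Proof. by rewrite -cardH -(cardsC H) addKn. Qed.

Lemma size_s : size s = #|C|.
Proof.
rewrite /s !size_cat /= -!cardE card_b card_cH -/i.
have := k_ge2; have := cardH; have := max_card H; rewrite -/k -/i; move: #|C| #|H| k i => a b1 c d; lia.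
Qed.

Lemma IinH x : x \in I -> x \in H /\ x \notin A.
Proof. by rewrite IH inE => /andP [-> ->]. Qed.

Lemma uniq_s : uniq s.
Proof.
rewrite /s cat_uniq enum_uniq /=; apply/andP; split.
  apply/hasPn => x; rewrite mem_cat inE !mem_enum in_setD1 in_setC.
  move=> /orP [/IinH [_ /negbTE ->]|/orP [/eqP -> |xH]]; [by rewrite andbF|by rewrite eqxx|].
  by rewrite andbC; apply: contra xH => /andP [xA _]; exact: (subsetP sAH).
rewrite cat_uniq enum_uniq cons_uniq enum_uniq mem_enum in_setC negbK (subsetP sAH b bA) andbT.
rewrite andbT andTb. apply/hasPn => x; rewrite inE !mem_enum => /orP [/eqP ->|].
  by apply/negP => /IinH [_]; rewrite bA.
by rewrite in_setC => xH; apply/negP => /IinH [xH' _]; move: xH; rewrite xH'.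
Qed.

Lemma nth_s (j : nat) : (j < #|C|)%N ->
  (nth b s j \in A) = (j < k.-1)%N || (j == k.-1 + i)%N /\
  (nth b s j \in H) = (j <= k.-1 + i)%N.
Proof.
move=> jC; have k2 := k_ge2; have i1 := i_ge1; have cH := cardH.
have mC := max_card H.
rewrite /s nth_cat -cardE card_b; case: ltnP => j1.
  have : nth b (enum (A :\ b)) j \in A :\ b by rewrite -mem_enum mem_nth // -cardE card_b.
  rewrite inE => /andP [_ xA]; rewrite xA (subsetP sAH) //; split => //; apply/esym; lia.
rewrite nth_cat -cardE; case: ltnP => j2.
  have : nth b (enum I) (j - k.-1) \in I by rewrite -mem_enum mem_nth // -cardE.
  move=> /IinH [-> /negbTE ->]; split; apply/esym; lia.
case eq : (j - k.-1 - #|I|)%N => [|n] /=.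
  rewrite bA (subsetP sAH) //; split; apply/esym; lia.
have : nth b (enum (~: H)) n \in ~: H.
  rewrite -mem_enum mem_nth // -cardE card_cH; lia.
rewrite inE => xH; rewrite (negbTE xH).
have -> : (nth b (enum (~: H)) n \in A) = false.
  by apply/negbTE; apply: contra xH => xA; exact: (subsetP sAH).
split; apply/esym; lia.
Qed.

Lemma inj_s : injectiveb [ffun j : 'I_#|C| => nth b s j].
Proof.
apply/injectiveP => j1 j2; rewrite !ffunE => /eqP.
rewrite nth_uniq ?size_s ?uniq_s // => /eqP; exact: ord_inj.
Qed.

Definition axb : axis C := @exist {ffun 'I_#|C| -> C} (fun f => injectiveb f) _ inj_s.

Lemma axfE j : axf axb j = nth b s j.
Proof. by rewrite /axf /= ffunE. Qed.

Lemma construct_ok : [/\ appvec A axb = canon #|C| k i, is_interval H axb,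
  ~ is_interval A axb & interval_closure A axb = H].
Proof.
have k2 := k_ge2; have i1 := i_ge1; have cH := cardH; have mC := max_card H.
have L_lt : (k.-1 + i < #|C|)%N.
  by move: mC cH k2 i1; move: #|C| #|H| k i => a b1 c d; lia.
have k_lt : (k.-1 < #|C|)%N by apply: leq_ltn_trans L_lt; apply: leq_addr.
have z_lt : (0 < #|C|)%N by apply: leq_ltn_trans k_lt.
have eA : appvec A axb = canon #|C| k i.
  apply/ffunP => j; rewrite !ffunE axfE; by have [-> _] := nth_s _ (ltn_ord j).
split => //.
- apply/interval_contig => j1 j2 j3 h12 h23; rewrite !ffunE !axfE.
  rewrite (proj2 (nth_s _ (ltn_ord j2))) (proj2 (nth_s _ (ltn_ord j3))) => _ h3.
  exact: leq_trans h23 h3.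
- rewrite interval_contig eA => ct.
  have := ct (Ordinal z_lt) (Ordinal k_lt) (Ordinal L_lt); rewrite !ffunE /=.
  have -> : (0 < k.-1)%N by move: k2; move: k => a; lia.
  rewrite ltnn /= eqxx orbT => /(_ (leq0n _) (leq_addr _ _) isT isT) /eqP.
  by move: i1; move: i => a; lia.
- apply/setP => c; have [j <-] := ax_surj axb c.
  rewrite axfE (proj2 (nth_s _ (ltn_ord j))) -axfE.
  apply/idP/idP.
    move=> /closure_idx [j1 [j3 [h1 h2 h3 h4]]].
    move: h4; rewrite axfE (proj1 (nth_s _ (ltn_ord j3))) => /orP [h4|/eqP h4].
      by apply: leq_trans h2 _; apply: leq_trans (ltnW h4) (leq_addr _ _).
    by rewrite -h4.
  move=> jL; apply/closure_idx; exists (Ordinal z_lt), (Ordinal L_lt); split => //.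
    by rewrite axfE (proj1 (nth_s _ z_lt)) /=; apply/orP; left; move: k2; move: k => a; lia.
  by rewrite axfE (proj1 (nth_s _ L_lt)) /= eqxx orbT.
Qed.

End WithB.

Lemma construct : exists ax2 : axis C,
  [/\ appvec A ax2 = canon #|C| k i, is_interval H ax2,
      ~ is_interval A ax2 & interval_closure A ax2 = H].
Proof.
have [a [b0 [c [aA b0A _ _ _]]]] := witnesses.
exists (@axb b0 b0A); exact: (@construct_ok b0 b0A).
Qed.

End Construct.

Theorem mainTheorem13 (C : finType) (R : realType)
  (g : {ffun 'I_#|C| -> bool} -> R) :
  (3 <= #|C|)%N ->
  (forall x, 0 <= g x) ->
  (forall x, g x = 0 <-> contiguous x) ->
  (forall x, g x = g (revvec x)) ->
  ballot_monotone g ->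
  exists h : nat -> nat -> R,
    forall (A : {set C}) (ax : axis C),
      A != set0 -> ~ is_interval A ax ->
      cost g A ax = h #|A| #|interfering A ax|.
Proof.
move=> _ _ g0 _ bm.
exists (fun k i => g (canon #|C| k i)) => A ax An nI.
have [ax2 [e HI nI2 ce]] := @construct C A ax nI.
have h1 := @key C R g g0 bm A ax ax2 An nI HI.
have h2 := @key C R g g0 bm A ax2 ax An nI2 (ltac:(rewrite ce; exact: closure_interval)).
rewrite /cost -e; apply/eqP; rewrite eq_le h1 h2.
by [].
Qed.
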